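(* Let $\omega=(\omega_0,\omega_1,\dots)\in\{0,1\}^{\mathbb{N}}$ have the following property: for every $l>0$ there exists $L>0$ such that for every $k\ge0$ the block $(\omega_k,\dots,\omega_{k+L-1})$ contains $l$ successive zeros. Then $\omega$ is not central, i.e. the set $\{i:\omega_i=1\}$ is not a central set.
   Context: $S\subset\mathbb{N}$ is central if there are a compact metric space $(Z,d)$ with continuous $R:Z\to Z$, a uniformly recurrent point $z_0$ (for every open $U\ni z_0$, $\{n:R^nz_0\in U\}$ has bounded gaps), a point $z$ proximal to $z_0$ ($d(R^{n_k}z,R^{n_k}z_0)\to0$ along some increasing sequence $n_k$), and a neighborhood $U$ of $z_0$ with $S=\{n:R^nz\in U\}$. *)

(* Defs.v *)
From HB Require Import structures.
From mathcomp Require Import all_boot all_order all_algebra.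
From mathcomp Require Import all_classical all_reals all_analysis.
From mathcomp Require Import Rstruct Rstruct_topology.
Set Implicit Arguments. Unset Strict Implicit. Unset Printing Implicit Defensive.
Import Order.TTheory GRing.Theory Num.Theory.
Local Open Scope classical_set_scope.
Local Open Scope ring_scope.

Definition uniformly_recurrent (Z : topologicalType) (T : Z -> Z) (z0 : Z) : Prop :=
  forall U : set Z, open U -> U z0 ->
    exists M : nat, forall m : nat, exists n : nat,
      (m <= n <= m + M)%N /\ U (iter n T z0).

Definition proximal (Z : metricType Rdefinitions.R) (T : Z -> Z) (z z0 : Z) : Prop :=
  exists nk : nat -> nat, (forall k, (nk k < nk k.+1)%N) /\
    (fun k => mdist (iter (nk k) T z) (iter (nk k) T z0)) @ \oo --> (0 : Rdefinitions.R).

Definition central (S : set nat) : Prop :=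
  exists (Z : metricType Rdefinitions.R) (T : Z -> Z) (z0 z : Z) (U : set Z),
    [/\ compact [set: Z], continuous T, uniformly_recurrent T z0,
        proximal T z z0 & nbhs z0 U] /\
    S = [set n | U (iter n T z)].

(* Main.v *)
Require Import Defs.
From HB Require Import structures.
From mathcomp Require Import all_boot all_order all_algebra.
From mathcomp Require Import all_classical all_reals all_analysis.
From mathcomp Require Import Rstruct Rstruct_topology.
From mathcomp Require Import lra zify.
Local Open Scope classical_set_scope.

Import Order.TTheory GRing.Theory Num.Theory.

Section helpers.
Context (Z : metricType Rdefinitions.R).
Local Open Scope ring_scope.

Lemma iter_cont (T : Z -> Z) : continuous T -> forall i (x : Z), {for x, continuous (iter i T)}.
Proof.
move=> cT; elim=> [|i IH] x /=; first exact: cvg_id.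
exact: (continuous_comp (IH x) (cT _)).
Qed.

Lemma fin_delta (f : nat -> Z -> Z) (w : Z) (eta : Rdefinitions.R) :
  (forall i, {for w, continuous (f i)}) -> 0 < eta -> forall L : nat,
  exists delta : Rdefinitions.R, 0 < delta /\
    forall i, (i < L)%N -> forall y, ball w delta y -> ball (f i w) eta (f i y).
Proof.
move=> cf eta0; elim=> [|L [d1 [d10 H1]]].
  by exists 1; split => // i.
have := cf L (ball (f L w) eta) (nbhsx_ballx _ _ eta0).
move=> /nbhs_ballP [d2 /= d20 H2].
exists (Order.min d1 d2); split; first by rewrite lt_min d10 d20.
move=> i; rewrite ltnS leq_eqVlt => /orP [/eqP -> | iL] y wy.
  apply: H2; apply: le_ball wy; rewrite ge_min lexx orbT //.
apply: H1 => //; apply: le_ball wy; rewrite ge_min lexx //.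
Qed.

End helpers.

Theorem mainTheorem18 (omega : nat -> bool) :
  (forall l : nat, (0 < l)%N ->
     exists L : nat, (0 < L)%N /\
       forall k : nat, exists j : nat,
         (k <= j)%N /\ (j + l <= k + L)%N /\
         forall t : nat, (t < l)%N -> omega (j + t) = false) ->
  ~ central [set i | omega i = true].
Proof.
move=> H [Z [T [z0 [z [U [[cZ cT ur [nk [_ cv]] nU] eqS]]]]]].
move/nbhs_ballP: nU => [eps /= eps0 epsU].
have eps20 : (0 < eps / 2)%R by rewrite divr_gt0.
have eps40 : (0 < eps / 4)%R by rewrite divr_gt0.
have [M HM] := ur (interior (ball z0 (eps / 2))) (@open_interior _ _)
  (nbhsx_ballx _ _ eps20).
have [L [L0 HL]] := H M.+1 isT.
pose x k := iter (nk k) T z0.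
pose y k := iter (nk k) T z.
have [w [_ clw]] := cZ (x @ \oo) _ (filterT).
have [delta [d0 Hd]] := @fin_delta Z (fun i => iter i T) w (eps / 4)%R
  (fun i => @iter_cont Z T cT i w) eps40 L.
have d20 : (0 < delta / 2)%R by rewrite divr_gt0.
have [K _ HK] := cvgr_lt _ cv _ d20.
have FA : (x @ \oo) [set p | exists2 k, (K <= k)%N & p = x k].
  by exists K => // k Kk; exists k.
have [p [[k Kk pk] pw]] := clw _ (ball w (delta / 2)%R) FA (nbhsx_ballx _ _ d20).
have byx : ball (y k) (delta / 2)%R (x k) by rewrite ballEmdist; exact: HK.
have pw' : ball w (delta / 2)%R (x k) by rewrite -pk.
have yk : ball w delta (y k).
  by have := ball_triangle pw' (ball_sym byx); rewrite -splitr.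
have [j [kj [jl zer]]] := HL (nk k).
have [n [/andP [jn nM] Un]] := HM j.
have iL : (n - nk k < L)%N by lia.
have en : n = (n - nk k + nk k)%N by lia.
have pwd : ball w delta (x k) by apply: le_ball pw'; lra.
have b1 := Hd _ iL _ pwd.
have b2 := Hd _ iL _ yk.
have b0 : ball z0 (eps / 2)%R (iter n T z0) := interior_subset Un.
rewrite en iterD in b0.
have b3 := ball_triangle (ball_triangle b0 (ball_sym b1)) b2.
have Uz : U (iter n T z).
  apply: epsU; rewrite en iterD; apply: le_ball b3; lra.
have : [set i | omega i = true] n by rewrite eqS.
rewrite /= -(subnKC jn) zer //; lia.
Qed.
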